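(* Let $o_{n,i}$ be the probability that a random Bernoulli text of length $n$ contains exactly $i$ clumps of $w$. Then $$\sum_{n,i\ge0}o_{n,i}\,u^i z^n=N(z)+\frac{u\,R(z)\,U(z)}{1-u\,M(z)+(u-1)K(z)}.$$
   Context: Let $\mathcal{A}$ be a finite alphabet with $|\mathcal{A}|\ge2$ and $w\in\mathcal{A}^*$ a fixed word of length $\ell=|w|\ge 2$. Bernoulli model: each letter $a$ has probability $p_a>0$, $\sum_a p_a=1$, $\mathbf{P}(a_1\cdots a_n)=\prod_i p_{a_i}$; for a language $L$, $L(z)=\sum_{x\in L}\mathbf{P}(x)z^{|x|}$; $\pi_w=\mathbf{P}(w)$. Occurrences of $w$ are position intervals where $w$ appears; two occurrences overlap if their intervals share a position; clumps are equivalence classes of occurrences under the transitive closure of overlapping. Autocorrelation set $\mathcal{C}=\{\epsilon\}\cup\{e\in\mathcal{A}^+: |e|<\ell,\ \exists e'\in\mathcal{A}^+,\ we=e'w\}$, $\mathcal{C}_\circ=\mathcal{C}\setminus\{\epsilon\}$, $\mathcal{K}=\mathcal{C}_\circ\setminus\mathcal{C}_\circ\mathcal{A}^+$ with generating function $K(z)$. Languages: $\mathcal{R}=\{r\in\mathcal{A}^*w: \text{no } r=xwy,\ |y|>0\}$; $\mathcal{M}=\{m\in\mathcal{A}^+: wm\in\mathcal{A}^*w,\ \text{no } wm=xwy,\ |x|>0,|y|>0\}$; $\mathcal{U}=\{u\in\mathcal{A}^*: \text{no } wu=xwy,\ |x|>0\}$; $\mathcal{N}=\{n: w\text{ not a factor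 of }n\}$, with generating functions $R(z),M(z),U(z),N(z)$; explicitly, with $C(z)$ the generating function of $\mathcal{C}$ and $D(z)=\pi_w z^{\ell}+(1-z)C(z)$: $R=\pi_w z^\ell/D$, $M=1+(z-1)/D$, $U=1/D$, $N=C/D$. *)

(* Defs.v *)
From HB Require Import structures.
From mathcomp Require Import all_boot all_order all_algebra.
Set Implicit Arguments. Unset Strict Implicit. Unset Printing Implicit Defensive.
Import Order.TTheory GRing.Theory Num.Theory.

Section Words.
Variable A : finType.
Variable w : seq A.

(* w occurs in s at (0-based) position i, i.e. on the interval [i, i+|w|-1] *)
Definition occ_at (s : seq A) (i : nat) : bool := take (size w) (drop i s) == w.

Definition occs (s : seq A) : {set 'I_(size s)} :=
  [set i : 'I_(size s) | occ_at s i].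

Arguments occs s : clear implicits.

(* two occurrences overlap iff their position intervals share a position *)
Definition ovl (s : seq A) : rel 'I_(size s) :=
  fun i j => [&& occ_at s i, occ_at s j, (i < j + size w)%N & (j < i + size w)%N].

Arguments ovl s : clear implicits.

Definition nclumps (s : seq A) : nat :=
  #|equivalence_partition (connect (ovl s)) (occs s)|.

(* R = { r in A^* w : no r = x w y with |y| > 0 } *)
Definition langR (r : seq A) : bool :=
  suffix w r &&
  ~~ has (fun i => occ_at r i && (i + size w < size r)%N) (iota 0 (size r)).

(* M = { m in A^+ : w m in A^* w, no w m = x w y with |x|>0, |y|>0 } *)
Definition langM (m : seq A) : bool :=
  [&& (0 < size m)%N, suffix w (w ++ m) &
   ~~ has (fun i => occ_at (w ++ m) i && (0 < i)%N && (i + size w < size (w ++ m))%N)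
          (iota 0 (size (w ++ m)))].

(* U = { u in A^* : no w u = x w y with |x| > 0 } *)
Definition langU (u : seq A) : bool :=
  ~~ has (fun i => occ_at (w ++ u) i && (0 < i)%N) (iota 0 (size (w ++ u))).

Definition langN (n : seq A) : bool := ~~ infix w n.

(* C_o = { e in A^+ : |e| < |w|, exists e' in A^+, w e = e' w } *)
Definition langCo (e : seq A) : bool :=
  [&& (0 < size e)%N, (size e < size w)%N &
   [exists k : 'I_(size w), [exists e' : k.-tuple A,
      (0 < k)%N && (w ++ e == tval e' ++ w)]]].

(* K = C_o \ C_o A^+ *)
Definition langK (e : seq A) : bool :=
  langCo e &&
  ~~ has (fun k => langCo (take k e) && (0 < size (drop k e))%N) (iota 0 (size e).+1).

End Words.

Section Series.
Local Open Scope ring_scope.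
Variable R : numFieldType.

Definition Pw (A : finType) (p : A -> R) (s : seq A) : R := \prod_(a <- s) p a.

(* coefficient of z^n in L(z) = sum_{x in L} P(x) z^|x| *)
Definition gfc (A : finType) (p : A -> R) (L : pred (seq A)) (n : nat) : R :=
  \sum_(x : n.-tuple A | L (tval x)) Pw p x.

Definition clump_prob (A : finType) (p : A -> R) (w : seq A) (n i : nat) : R :=
  \sum_(x : n.-tuple A | nclumps w x == i) Pw p x.

(* Formal power series in two variables u, z: f i n = coefficient of u^i z^n *)
Definition fps2 := nat -> nat -> R.

Definition fps2_const (c : R) : fps2 := fun i n => if (i == 0)%N && (n == 0)%N then c else 0.
Definition fps2_u : fps2 := fun i n => if (i == 1)%N && (n == 0)%N then 1 else 0.
Definition fps2_z (f : nat -> R) : fps2 := fun i n => if (i == 0)%N then f n else 0.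
Definition fps2_add (f g : fps2) : fps2 := fun i n => f i n + g i n.
Definition fps2_opp (f : fps2) : fps2 := fun i n => - f i n.
Definition fps2_mul (f g : fps2) : fps2 := fun i n =>
  \sum_(j < i.+1) \sum_(k < n.+1) f j k * g (i - j)%N (n - k)%N.
Definition fps2_pow (f : fps2) (k : nat) : fps2 := iter k (fps2_mul f) (fps2_const 1).
(* inverse of a series f with constant term 1: 1/f = sum_k (1 - f)^k, where
   only k <= i + n contributes to the coefficient of u^i z^n *)
Definition fps2_inv (f : fps2) : fps2 := fun i n =>
  \sum_(k < (i + n).+1) fps2_pow (fps2_add (fps2_const 1) (fps2_opp f)) k i n.
End Series.

(* Main.v *)
From Stdlib Require Import FunctionalExtensionality Lia.
Require Import Defs.
From HB Require Import structures.
From mathcomp Require Import all_boot all_order all_algebra.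
Import Order.TTheory GRing.Theory Num.Theory.
Set Implicit Arguments. Unset Strict Implicit. Unset Printing Implicit Defensive.

Ltac slia_pre := repeat match goal with
 | H : is_true (_ <= _)%N |- _ => generalize (elimT ssrnat.leP H); clear H; intro H
 | H : is_true (_ < _)%N |- _ => generalize (elimT ssrnat.ltP H); clear H; intro H
 | H : is_true (_ == _)%N |- _ => generalize (elimT eqP H); clear H; intro H
 | H : is_true (~~ (_ == _))%N |- _ => generalize (elimT eqP H); clear H; intro H
 | H : (_ <= _)%N = false |- _ => generalize (elimF ssrnat.leP H); clear H; intro H
 | H : (_ < _)%N = false |- _ => generalize (elimF ssrnat.ltP H); clear H; intro H
 | H : (_ == _)%N = false |- _ => generalize (elimF eqP H); clear H; intro H
 | H : (_ <= _)%N = true |- _ => generalize (elimT ssrnat.leP H); clear H; intro H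
 | H : (_ < _)%N = true |- _ => generalize (elimT ssrnat.ltP H); clear H; intro H
 | H : is_true (_ && _) |- _ => destruct (andP H); clear H
 | |- is_true (_ && _) => apply/andP; split
 | H : is_true (~~ (_ < _))%N |- _ => rewrite -leqNgt in H
 | H : is_true (~~ (_ <= _))%N |- _ => rewrite -ltnNge in H
 | |- is_true (~~ (_ < _))%N => rewrite -leqNgt
 | |- is_true (~~ (_ <= _))%N => rewrite -ltnNge
 | |- (_ <= _)%N = true => apply/ssrnat.leP
 | |- (_ < _)%N = true => apply/ssrnat.ltP
 | |- is_true (_ <= _)%N => apply/ssrnat.leP
 | |- is_true (_ < _)%N => apply/ssrnat.ltP
 | |- is_true (_ == _)%N => apply/eqP
 | |- is_true (~~ (_ == _))%N => apply/eqP
 | H : context [addn] |- _ => rewrite -plusE in H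
 | H : context [subn] |- _ => rewrite -minusE in H
 | |- context [addn] => rewrite -plusE
 | |- context [subn] => rewrite -minusE
 end.
Ltac slia := intros; slia_pre;
  repeat match goal with H : ?P |- _ => match type of P with Prop => revert H end end;
  repeat match goal with |- context [@size ?T ?x] => let n := fresh "n" in set n := @size T x; clearbody n end;
  intros; first [lia | exfalso; lia].

Lemma max_witness (P : pred nat) B : (exists i, P i) -> (forall i, P i -> i < B) ->
  exists i, P i /\ forall j, P j -> j <= i.
Proof.
move=> ex ub; have ub' : forall i, P i -> i <= B by move=> i /ub /ltnW.
case: (ex_maxnP ex ub') => i Pi mx; by exists i.
Qed.

Section Words.
Variable A : finType.
Variable w : seq A.
Variable hw : (0 < size w)%N.
Local Notation l := (size w).
Local Notation occ := (occ_at w).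

Lemma occ_size s i : occ s i -> i + l <= size s.
Proof.
move/eqP=> e; have := congr1 size e; rewrite size_take size_drop.
case: ifP => h E2; slia.
Qed.

Lemma occ_big s i : size s < i + l -> occ s i = false.
Proof. by move=> h; apply/negP => /occ_size; rewrite leqNgt h. Qed.

Lemma occ_split s i : occ s i -> s = take i s ++ w ++ drop (i + l) s.
Proof.
move/eqP=> e; rewrite -{1}(cat_take_drop i s); congr (_ ++ _).
by rewrite -{1}(cat_take_drop l (drop i s)) e drop_drop addnC.
Qed.

Lemma occ_take s i : occ s i -> take (i + l) s = take i s ++ w.
Proof.
move=> h; rewrite {1}(occ_split h) takeD take_cat size_take.
have hs := occ_size h.
have -> : (if i < size s then i else size s) = i.
  by case: ifP => // /negbT; rewrite -leqNgt => h2; apply/eqP; rewrite eqn_leq h2; slia.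
rewrite ltnn subnn take0 cats0 drop_cat size_take.
have -> : (if i < size s then i else size s) = i.
  by case: ifP => // /negbT; rewrite -leqNgt => h2; apply/eqP; rewrite eqn_leq h2; slia.
by rewrite ltnn subnn drop0 take_cat ltnn subnn take0 cats0.
Qed.

Lemma occ_cat_l h v i : i + l <= size h -> occ (h ++ v) i = occ h i.
Proof.
move=> hi; rewrite /occ_at drop_cat.
case: ifP => hlt; last by slia.
rewrite take_cat size_drop.
case: ifP => // /negbT; rewrite -leqNgt => h2.
have e : size h - i = l by slia.
by rewrite e subnn take0 cats0 take_oversize // size_drop e.
Qed.

Lemma occ_cat_r h v i : occ (h ++ v) (size h + i) = occ v i.
Proof. by rewrite /occ_at drop_cat ltnNge leq_addr /= addKn. Qed.

Lemma suffix_occ x : suffix w x -> occ x (size x - l).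
Proof.
rewrite suffixE => /eqP e; rewrite /occ_at e take_oversize //.
Qed.

Lemma occ_drop x i t : occ (drop i x) t = occ x (i + t).
Proof. by rewrite /occ_at drop_drop addnC. Qed.

Lemma suffix_drop x i : suffix w x -> i + l <= size x -> suffix w (drop i x).
Proof.
rewrite !suffixE size_drop drop_drop => h hi.
have -> : (size x - i - l + i = size x - l)%N by slia.
exact: h.
Qed.


Definition start s i := occ s i && ~~ has (fun j => occ s j && (i < j + l)) (iota 0 i).
Definition cl s := count (start s) (iota 0 (size s)).

Lemma start_occ s i : start s i -> occ s i.
Proof. by case/andP. Qed.

Lemma ovl_sym s : symmetric (@ovl A w s).
Proof.
move=> i j; rewrite /ovl.
by case: (occ s i); case: (occ s j) => //=; rewrite andbC.
Qed.

Lemma start_min s (i j : 'I_(size s)) : start s i -> connect (@ovl A w s) i j -> (i <= j)%N.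
Proof.
move=> hs /connectP [p hp ->]; move: hp.
suff H : forall x : 'I_(size s), (i <= x)%N -> path (@ovl A w s) x p -> (i <= last x p)%N.
  exact: H.
elim: p => [|y p IH] x hx //= /andP [hxy hp]; apply: IH hp.
rewrite leqNgt; apply/negP => hyi.
move: hs => /andP [_ /hasPn /(_ (nat_of_ord y))]; rewrite mem_iota /= hyi => /(_ isT).
move: hxy; rewrite /ovl => /and4P [_ ->].
move=> h1 _ /=; rewrite (leq_trans _ h1) //. 
Qed.

Lemma occ_conn_start s (x : 'I_(size s)) : occ s x ->
  exists y : 'I_(size s), start s y && connect (@ovl A w s) x y.
Proof.
have [n] := ubnP (nat_of_ord x); elim: n x => // n IH x hxn hocc.
case hst: (start s x); first by exists x; rewrite hst connect0.
move: hst; rewrite /start hocc /= => /negbFE /hasP [j]; rewrite mem_iota /= => hjx /andP [hoj hxj].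
have hj : (j < size s)%N by exact: ltn_trans hjx (ltn_ord x).
have [y /andP [hy cy]] := IH (Ordinal hj) (leq_trans hjx (hxn)) hoj.
exists y; apply/andP; split => //; apply: connect_trans cy; apply: connect1.
rewrite /ovl /= hocc hoj hxj /=; slia.
Qed.

Lemma card_start s : #|[set i : 'I_(size s) | start s i]| = cl s.
Proof.
rewrite cardsE -sum1_card /cl -sum1_count.
rewrite [RHS](_ : _ = \sum_(0 <= i < size s | start s i) 1%N); last by rewrite /index_iota subn0.
by rewrite big_mkord; apply: eq_bigl => i.
Qed.

Lemma nclumps_cl s : nclumps w s = cl s.
Proof.
rewrite /nclumps /equivalence_partition.
set Px := fun x => _.
have -> : [set Px x | x in occs w s] = [set Px x | x in [set i : 'I_(size s) | start s i]].
  apply/setP => X; apply/imsetP/imsetP => [[x hx ->]|[y hy ->]].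
    move: hx; rewrite inE => hx.
    have [y /andP [hy cy]] := occ_conn_start hx.
    exists y; first by rewrite inE.
    apply/setP => z; rewrite !inE.
    by rewrite (same_connect (sym_connect_sym (@ovl_sym s)) cy z).
  exists y => //; move: hy; rewrite !inE; exact: start_occ.
rewrite card_in_imset ?card_start //.
move=> y1 y2; rewrite !inE => h1 h2 e.
have c12 : connect (@ovl A w s) y1 y2.
  have : y2 \in Px y2 by rewrite inE connect0 andbT inE (start_occ h2).
  by rewrite -e inE => /andP [].
have c21 : connect (@ovl A w s) y2 y1.
  have : y1 \in Px y1 by rewrite inE connect0 andbT inE (start_occ h1).
  by rewrite e inE => /andP [].
by apply/val_inj/eqP; rewrite eqn_leq (start_min h1 c12) (start_min h2 c21).
Qed.


Lemma start_ext s s' i : (forall j, (j <= i)%N -> occ s j = occ s' j) -> start s i = start s' i.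
Proof.
move=> h; rewrite /start h //; congr (_ && ~~ _); apply: eq_in_has => j.
by rewrite mem_iota add0n => /andP [_ hj] /=; rewrite h // ltnW.
Qed.

Lemma start_big s i : (size s < i + l)%N -> start s i = false.
Proof. by move=> h; rewrite /start occ_big. Qed.

Lemma cl_B s B : (size s <= B)%N -> cl s = count (start s) (iota 0 B).
Proof.
rewrite /cl => hB; rewrite -(subnKC hB) iotaD count_cat add0n.
rewrite [X in _ = _ + X](@eq_in_count _ _ pred0) ?count_pred0 ?addn0 //.
move=> i; rewrite mem_iota => /andP [hi _] /=; apply: start_big; slia.
Qed.

Lemma infix_occ s : infix w s = has (occ s) (iota 0 (size s)).
Proof.
apply/idP/idP.
  case/infixP => a [b ->]; apply/hasP; exists (size a).
    by rewrite mem_iota /= !size_cat; slia.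
  by rewrite -[size a]addn0 occ_cat_r /occ_at drop0 take_size_cat.
case/hasP => i _ /occ_split ->; exact: infix_infix.
Qed.

Lemma cl_eq0 s : (cl s == 0)%N = ~~ infix w s.
Proof.
rewrite infix_occ /cl -[(_ == 0)%N]negbK -lt0n -has_count; congr (~~ _).
apply/hasP/hasP => [[i hi /start_occ ho]|[i hi ho]]; first by exists i.
have hs : (i < size s)%N by move: hi; rewrite mem_iota.
have [y /andP [hy _]] := @occ_conn_start s (Ordinal hs) ho.
by exists (nat_of_ord y) => //; rewrite mem_iota /=.
Qed.

Lemma occ_U h v : suffix w h -> langU w v -> forall i, occ (h ++ v) i = occ h i.
Proof.
case/suffixP => h0 -> hU i.
case: (leqP (i + l) (size (h0 ++ w))) => hi; first by rewrite occ_cat_l.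
rewrite (occ_big hi).
case: (ltnP i (size h0)) => hi0; first by move: hi; rewrite size_cat; slia.
rewrite -(subnKC hi0) -catA occ_cat_r; apply/negP => ho.
move: hU; rewrite /langU => /hasPn /(_ (i - size h0)).
rewrite mem_iota /= ho /=.
have := occ_size ho; rewrite size_cat size_cat in hi *; move=> hs hh; move: (hh ltac:(slia)); slia.
Qed.

Lemma cl_U h v : suffix w h -> langU w v -> cl (h ++ v) = cl h.
Proof.
move=> hs hU; rewrite (@cl_B h (size (h ++ v))) ?size_cat ?leq_addr // /cl.
rewrite size_cat; apply: eq_count => i; apply: start_ext => j _; exact: occ_U.
Qed.

Lemma suffix_size s : suffix w s -> (l <= size s)%N.
Proof. exact: size_suffix. Qed.

Lemma occ_M h m : suffix w h -> langM w m ->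
  forall i, i != (size h + size m - l)%N -> occ (h ++ m) i = occ h i.
Proof.
case/suffixP => h0 -> /and3P [hm0 _ hM] i hiL.
case: (leqP (i + l) (size (h0 ++ w))) => hi; first by rewrite occ_cat_l.
rewrite (occ_big hi).
case: (ltnP i (size h0)) => hi0; first by move: hi; rewrite size_cat; slia.
rewrite -(subnKC hi0) -catA occ_cat_r; apply/negP => ho.
have hs := occ_size ho.
move: hM => /hasPn /(_ (i - size h0)).
rewrite mem_iota /= ho /=.
move: hi hs hiL; rewrite !size_cat => hi hs hiL hh; move: (hh ltac:(slia)).
move=> /negP; apply; apply/andP; split; first by slia.
move: hiL => /eqP hiL; slia.
Qed.

Lemma langM_suffix h m : suffix w h -> langM w m -> suffix w (h ++ m).
Proof.
case/suffixP => h0 -> /and3P [_ hs _]; rewrite -catA; exact: suffix_catr.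
Qed.

Lemma occ_M_last h m : suffix w h -> langM w m -> occ (h ++ m) (size h + size m - l).
Proof. by move=> hh hm; rewrite -size_cat; apply: suffix_occ; apply: langM_suffix. Qed.

Lemma cl_M h m : suffix w h -> langM w m -> cl (h ++ m) = (cl h + (l <= size m))%N.
Proof.
move=> hh hm; have hl := suffix_size hh.
have hm0 : (0 < size m)%N by case/and3P: hm.
set L := (size h + size m - l)%N.
have hL : size (h ++ m) = (L + l)%N by rewrite size_cat /L; slia.
rewrite (@cl_B h (L + l)); last by rewrite -hL size_cat leq_addr.
rewrite /cl hL iotaD.
have -> : iota (0 + L) l = L :: iota L.+1 l.-1 by rewrite add0n -{1}(prednK hw).
rewrite !count_cat /=.
have e1 : count (start (h ++ m)) (iota 0 L) = count (start h) (iota 0 L).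
  apply: eq_in_count => i; rewrite mem_iota /= => hi; apply: start_ext => j hj.
  apply: occ_M => //; apply/eqP => e; move: hi hj; rewrite e /L; slia.
have e2 : forall s, (size s <= size (h ++ m))%N -> count (start s) (iota L.+1 l.-1) = 0%N.
  move=> s hs; rewrite (@eq_in_count _ _ pred0) ?count_pred0 //.
  move=> i; rewrite mem_iota => /andP [hi _] /=; apply: start_big; move: hs; rewrite hL; slia.
rewrite e1 !e2 ?size_cat ?leq_addr // !addn0.
have -> : start h L = false by apply: start_big; rewrite /L; slia.
rewrite addn0; congr (_ + nat_of_bool _)%N.
rewrite /start occ_M_last //=.
case: (leqP l (size m)) => hlm /=.
  apply/hasPn => j; rewrite mem_iota /= => hj; apply/negP => /andP [ho hLj].
  rewrite occ_M // in ho; last by apply/eqP => e; move: hj; rewrite e /L; slia.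
  have := occ_size ho; move: hLj hlm; rewrite /L; slia.
apply: negbF; apply/hasP; exists (size h - l)%N.
  by rewrite mem_iota /= /L; slia.
rewrite occ_M //; last by apply/eqP; rewrite /L; slia.
by rewrite suffix_occ //= /L; slia.
Qed.

Lemma cl_R x : langR w x -> cl x = 1%N.
Proof.
case/andP => hs hR.
have hl := suffix_size hs.
have ho : forall i, occ x i = (i == size x - l)%N.
  move=> i; apply/idP/eqP => [h|->]; last exact: suffix_occ.
  have := occ_size h; move: hR => /hasPn /(_ i).
  rewrite mem_iota /= h /= => h1 h2.
  have h3 : (i < size x)%N by slia.
  move: (h1 h3); slia.
rewrite /cl (@eq_in_count _ _ (pred1 (size x - l)%N)).
  rewrite count_uniq_mem ?iota_uniq // mem_iota /=.
  by rewrite (_ : (size x - l < 0 + size x)%N = true) //; slia.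
move=> i _ /=; rewrite /start ho.
case: eqP => //= ->; apply/hasPn => j; rewrite mem_iota ho /= => hj.
by apply/negP => /andP [/eqP e _]; move: hj; rewrite e ltnn.
Qed.


Lemma occ_drop_eq x j : occ x j -> drop j x = w ++ drop (j + l) x.
Proof.
move/eqP=> e; by rewrite -{1}(cat_take_drop l (drop j x)) e drop_drop addnC.
Qed.

Lemma take_occ_suffix x j : occ x j -> suffix w (take (j + l) x).
Proof. by move=> h; rewrite occ_take //; apply: suffix_suffix. Qed.

Lemma suffix_occ_self h : suffix w h -> occ h (size h - l).
Proof. exact: suffix_occ. Qed.

Definition QG i x := infix w x && (cl x == i).
Definition QG2 i h v := [&& suffix w h, cl h == i & langU w v].

Lemma G_D1 i h v : QG2 i h v -> QG i (h ++ v).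
Proof.
case/and3P => hs hc hu; rewrite /QG cl_U // hc andbT.
by apply: infix_catr; apply: suffixW.
Qed.

Lemma G_D2 i x : QG i x -> exists2 k, (k <= size x)%N & QG2 i (take k x) (drop k x).
Proof.
case/andP => hinf hc.
have [j [hj hmax]] : exists j, occ x j /\ forall j', occ x j' -> (j' <= j)%N.
  apply: (@max_witness (occ x) (size x)).
    by move: hinf; rewrite infix_occ => /hasP [j _ hj]; exists j.
  by move=> j /occ_size; slia.
exists (j + l)%N; first exact: occ_size.
have hs := take_occ_suffix hj.
have hU : langU w (drop (j + l) x).
  apply/hasPn => t _; apply/negP => /andP [ho ht].
  move: ho; rewrite -occ_drop_eq // occ_drop => /hmax; slia.
by rewrite /QG2 hs hU -(cl_U hs hU) cat_take_drop hc.
Qed.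

Lemma G_D3' i h v h' v' : QG2 i h v -> QG2 i h' v' -> h ++ v = h' ++ v' ->
  (size h < size h')%N -> False.
Proof.
case/and3P => hs _ hu /and3P [hs' _ hu'] e hlt.
have hl' := suffix_size hs'.
have : occ (h' ++ v') (size h' - l) by rewrite (occ_U hs' hu') suffix_occ.
rewrite -e (occ_U hs hu) => /occ_size; slia.
Qed.

Lemma G_D3 i h v h' v' : QG2 i h v -> QG2 i h' v' -> h ++ v = h' ++ v' ->
  size h = size h'.
Proof.
move=> q q' e; case: (ltngtP (size h) (size h')) => // hlt.
  by case: (G_D3' q q' e hlt).
by case: (G_D3' q' q (esym e) hlt).
Qed.

Definition QH i x := [&& suffix w x, ~~ langR w x & cl x == i].
Definition QH2 i h m := [&& suffix w h, langM w m & (cl h + (l <= size m) == i)%N].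

Lemma H_D1 i h m : QH2 i h m -> QH i (h ++ m).
Proof.
case/and3P => hs hm hc; rewrite /QH langM_suffix // cl_M // hc andbT /=.
have hl := suffix_size hs.
have hm0 : (0 < size m)%N by case/and3P: hm.
rewrite /langR negb_and; apply/orP; right; rewrite negbK.
apply/hasP; exists (size h - l)%N.
  by rewrite mem_iota /= size_cat; slia.
rewrite occ_cat_l ?suffix_occ //= ?size_cat; slia.
Qed.

Lemma H_D2 i x : QH i x -> exists2 k, (k <= size x)%N & QH2 i (take k x) (drop k x).
Proof.
case/and3P => hs hR hc.
move: hR; rewrite /langR hs /= negbK => hex.
have [j [/andP [hj hjl] hmax]] : exists j, (occ x j && (j + l < size x)%N) /\
    forall j', (occ x j' && (j' + l < size x)%N) -> (j' <= j)%N.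
  apply: (@max_witness _ (size x)).
    by move/hasP: hex => [j _ hj]; exists j.
  by move=> j /andP [_]; slia.
exists (j + l)%N; first exact: occ_size.
have hsh := take_occ_suffix hj.
have hM : langM w (drop (j + l) x).
  apply/and3P; split.
  - by rewrite size_drop; slia.
  - rewrite -occ_drop_eq //; apply: suffix_drop => //; exact: occ_size.
  - apply/hasPn => t _; apply/negP => /andP [/andP [ho ht] htl].
    move: ho htl; rewrite -occ_drop_eq // occ_drop size_drop => ho htl.
    have : (j + t <= j)%N by apply: hmax; rewrite ho /=; slia.
    slia.
rewrite /QH2 hsh hM /= -(cl_M hsh hM) cat_take_drop; exact: hc.
Qed.

Lemma H_D3' i h m h' m' : QH2 i h m -> QH2 i h' m' -> h ++ m = h' ++ m' ->
  (size h < size h')%N -> False.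
Proof.
case/and3P => hs hm _ /and3P [hs' hm' _] e hlt.
have hl' := suffix_size hs'.
have hm0' : (0 < size m')%N by case/and3P: hm'.
have hsz : (size h + size m = size h' + size m')%N by rewrite -!size_cat e.
have : occ (h' ++ m') (size h' - l) by rewrite occ_cat_l ?suffix_occ //; slia.
rewrite -e (occ_M hs hm) => [/occ_size|]; first by slia.
apply/eqP; slia.
Qed.

Lemma H_D3 i h m h' m' : QH2 i h m -> QH2 i h' m' -> h ++ m = h' ++ m' ->
  size h = size h'.
Proof.
move=> q q' e; case: (ltngtP (size h) (size h')) => // hlt.
  by case: (H_D3' q q' e hlt).
by case: (H_D3' q' q (esym e) hlt).
Qed.

Lemma langCoE e : langCo w e = [&& (0 < size e)%N, (size e < l)%N & suffix w (w ++ e)].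
Proof.
rewrite /langCo; case he0: (0 < size e)%N => //=; case he: (size e < l)%N => //=.
apply/existsP/idP.
  by case=> k /existsP [e' /andP [_ /eqP ->]]; apply: suffix_suffix.
case/suffixP => s0 hs0.
have hsz : size s0 == size e.
  by have := congr1 size hs0; rewrite !size_cat; slia.
exists (Ordinal he); apply/existsP; exists (Tuple hsz) => /=.
by rewrite hs0 eqxx he0.
Qed.



Lemma langCo_take m t : (0 < t)%N -> (t < size m)%N -> (t < l)%N ->
  langCo w (take t m) = occ (w ++ m) t.
Proof.
move=> ht0 htm htl.
have hst : size (take t m) = t by rewrite size_take htm.
rewrite langCoE hst ht0 htl /= suffixE size_cat hst addKn.
rewrite /occ_at take_drop.
have -> : take (l + t) (w ++ m) = w ++ take t m.
  by rewrite take_cat ltnNge leq_addr /= addKn.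
by [].
Qed.

Lemma langKE m : langK w m = langM w m && (size m < l)%N.
Proof.
case hlt: (size m < l)%N; last by rewrite andbF /langK langCoE hlt !andbF.
rewrite andbT /langK langCoE hlt /langM.
case hm0: (0 < size m)%N; last by [].
rewrite !andTb.
congr (_ && ~~ _).
apply/hasP/hasP => [[k hk /andP [hc hd]]|[t ht /andP [/andP [ho ht0] htl]]].
  move: hk hd; rewrite mem_iota size_drop => hk hd.
  have hkm : (k < size m)%N by slia.
  have hk0 : (0 < k)%N.
    by move: hc; rewrite langCoE size_take hkm => /andP [].
  exists k; first by rewrite mem_iota size_cat; slia.
  rewrite -(@langCo_take m k) //; last by slia.
  apply/andP; split; first by apply/andP; split.
  rewrite size_cat; slia.
have htm : (t < size m)%N by move: htl; rewrite size_cat; slia.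
exists t; first by rewrite mem_iota; slia.
rewrite langCo_take //; last by slia.
apply/andP; split => //; rewrite size_drop; slia.
Qed.

End Words.

Local Open Scope ring_scope.

Section Alg.
Variable R : numFieldType.
Local Notation fps := (fps2 R).

Definition agree (I N : nat) (f : fps) (P : {poly {poly R}}) :=
  forall i n, (i <= I)%N -> (n <= N)%N -> f i n = P`_i`_n.

Definition Tr (I N : nat) (f : fps) : {poly {poly R}} :=
  \poly_(i < I.+1) \poly_(n < N.+1) f i n.

Lemma agree_Tr I N f : agree I N f (Tr I N f).
Proof. by move=> i n hi hn; rewrite /Tr coef_poly ltnS hi coef_poly ltnS hn. Qed.

Arguments agree_Tr : clear implicits.

Lemma coef2M (P Q : {poly {poly R}}) i n :
  (P * Q)`_i`_n = \sum_(j < i.+1) \sum_(k < n.+1) P`_j`_k * Q`_(i - j)`_(n - k).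
Proof.
rewrite coefM coef_sum; apply: eq_bigr => j _; by rewrite coefM.
Qed.

Lemma agree_mul I N f g P Q : agree I N f P -> agree I N g Q ->
  agree I N (fps2_mul f g) (P * Q).
Proof.
move=> hf hg i n hi hn; rewrite coef2M /fps2_mul.
apply: eq_bigr => j _; apply: eq_bigr => k _.
have hj : (j <= I)%N by apply: leq_trans hi; rewrite -ltnS.
have hk : (k <= N)%N by apply: leq_trans hn; rewrite -ltnS.
rewrite hf // hg //; apply: leq_trans (leq_subr _ _) _ => //.
Qed.

Lemma agree_add I N f g P Q : agree I N f P -> agree I N g Q ->
  agree I N (fps2_add f g) (P + Q).
Proof. by move=> hf hg i n hi hn; rewrite /fps2_add hf // hg // !coefD. Qed.

Lemma agree_opp I N f P : agree I N f P -> agree I N (fps2_opp f) (- P).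
Proof. by move=> hf i n hi hn; rewrite /fps2_opp hf // !coefN. Qed.

Lemma agree_one (I N : nat) : agree I N (fps2_const 1) 1.
Proof.
move=> i n _ _; rewrite /fps2_const coef1.
by case: i => [|i] /=; rewrite ?coef1 ?coef0 //; case: n.
Qed.

Arguments agree_one : clear implicits.

Lemma agree_eq I N (f g : fps) P : agree I N f P -> agree I N g P ->
  forall i n, (i <= I)%N -> (n <= N)%N -> f i n = g i n.
Proof. by move=> hf hg i n hi hn; rewrite hf // hg. Qed.

Lemma agree_eq' I N (f g : fps) P Q : agree I N f P -> agree I N g Q -> P = Q -> f I N = g I N.
Proof. by move=> hf hg e; rewrite hf // hg // e. Qed.

Lemma fps2_mulC (f g : fps) : fps2_mul f g = fps2_mul g f.
Proof.
apply: functional_extensionality => i; apply: functional_extensionality => n.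
apply: (agree_eq' (agree_mul (agree_Tr i n f) (agree_Tr i n g))
  (agree_mul (agree_Tr i n g) (agree_Tr i n f))); exact: mulrC.
Qed.

Lemma fps2_mulA (f g h : fps) : fps2_mul f (fps2_mul g h) = fps2_mul (fps2_mul f g) h.
Proof.
apply: functional_extensionality => i; apply: functional_extensionality => n.
apply: (agree_eq' (agree_mul (agree_Tr i n f) (agree_mul (agree_Tr i n g) (agree_Tr i n h)))
  (agree_mul (agree_mul (agree_Tr i n f) (agree_Tr i n g)) (agree_Tr i n h))); exact: mulrA.
Qed.

Lemma fps2_mulDr (f g h : fps) :
  fps2_mul f (fps2_add g h) = fps2_add (fps2_mul f g) (fps2_mul f h).
Proof.
apply: functional_extensionality => i; apply: functional_extensionality => n.
apply: (agree_eq' (agree_mul (agree_Tr i n f) (agree_add (agree_Tr i n g) (agree_Tr i n h)))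
  (agree_add (agree_mul (agree_Tr i n f) (agree_Tr i n g)) (agree_mul (agree_Tr i n f) (agree_Tr i n h)))).
exact: mulrDr.
Qed.

Lemma fps2_mul1 (f : fps) : fps2_mul f (fps2_const 1) = f.
Proof.
apply: functional_extensionality => i; apply: functional_extensionality => n.
apply: (agree_eq' (agree_mul (agree_Tr i n f) (agree_one i n)) (agree_Tr i n f)).
exact: mulr1.
Qed.

End Alg.

Section Inv.
Variable R : numFieldType.
Local Notation fps := (fps2 R).
Variable E : fps.
Variable hE0 : forall i, E i 0 = 0.

Lemma pow_hi k i n : (n < k)%N -> fps2_pow E k i n = 0.
Proof.
elim: k i n => [//|k IH] i n hn.
rewrite /fps2_pow iterS -/(fps2_pow E k) /fps2_mul.
apply: big1 => j _; apply: big1 => [[t ht]] _ /=.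
case: t ht => [|t] ht; first by rewrite hE0 mul0r.
rewrite IH ?mulr0 //.
rewrite ltnS in hn; apply: leq_trans _ hn.
rewrite ltn_subrL /=; move: ht; rewrite ltnS; exact: leq_ltn_trans (leq0n t).
Qed.

Definition Ssum : fps := fun i n => \sum_(k < (i + n).+1) fps2_pow E k i n.

Lemma sum_trunc (F : nat -> R) n T : (n < T)%N -> (forall k, (n < k)%N -> F k = 0) ->
  \sum_(k < T) F k = \sum_(k < n.+1) F k.
Proof.
move=> hT hF; rewrite -!(big_mkord xpredT) (@big_cat_nat _ _ _ n.+1 0 T _ _ (leq0n n.+1) hT) /=.
rewrite [X in _ + X = _]big_nat_cond [X in _ + X = _]big1 ?addr0 //.
by move=> k /andP[/andP[hk _] _]; apply: hF.
Qed.

Lemma Ssum_T i n T : (n < T)%N -> Ssum i n = \sum_(k < T) fps2_pow E k i n.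
Proof.
move=> hT; have hF : forall k, (n < k)%N -> fps2_pow E k i n = 0.
  by move=> k hk; apply: pow_hi.
rewrite /Ssum (@sum_trunc (fun k => fps2_pow E k i n) n) //; last by rewrite ltnS leq_addl.
by rewrite (@sum_trunc (fun k => fps2_pow E k i n) n T).
Qed.

Lemma Ssum_fix : Ssum = fps2_add (fps2_const 1) (fps2_mul E Ssum).
Proof.
apply: functional_extensionality => i; apply: functional_extensionality => n.
rewrite /fps2_add (@Ssum_T i n n.+2) // big_ord_recl /=.
congr (_ + _).
transitivity (\sum_(k < n.+1) fps2_mul E (fps2_pow E k) i n); first by [].
rewrite /fps2_mul.
rewrite exchange_big; apply: eq_bigr => j _.
rewrite exchange_big; apply: eq_bigr => t _.
rewrite (@Ssum_T (i - j) (n - t) n.+1) ?mulr_sumr //.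
by rewrite ltnS leq_subr.
Qed.

Lemma fix_uniq (B X Y : fps) : X = fps2_add B (fps2_mul X E) ->
  Y = fps2_add B (fps2_mul Y E) -> X = Y.
Proof.
move=> hX hY.
suff H : forall n i, X i n = Y i n.
  by apply: functional_extensionality => i; apply: functional_extensionality => n.
move=> n; elim: n {-2}n (leqnn n) => [|N IH] n hn i.
  rewrite hX hY /fps2_add /fps2_mul; congr (_ + _).
  apply: eq_bigr => j _; apply: eq_bigr => t _.
  have -> : (n - t = 0)%N by apply/eqP; rewrite subn_eq0 (leq_trans hn).
  by rewrite hE0 !mulr0.
rewrite hX hY /fps2_add /fps2_mul; congr (_ + _).
apply: eq_bigr => j _; apply: eq_bigr => [[t ht]] _ /=.
case: (ltnP t n) => htn.
  by rewrite IH // -ltnS; apply: leq_trans hn.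
have -> : (n - t = 0)%N by apply/eqP; rewrite subn_eq0.
by rewrite hE0 !mulr0.
Qed.

Lemma fix_sol (B X : fps) : X = fps2_add B (fps2_mul X E) -> X = fps2_mul B Ssum.
Proof.
move=> hX; apply: (fix_uniq hX).
rewrite {1}Ssum_fix fps2_mulDr fps2_mul1; congr fps2_add.
by rewrite fps2_mulA [fps2_mul B E]fps2_mulC -fps2_mulA fps2_mulC.
Qed.

End Inv.

Section Sums.
Variable R : numFieldType.
Variable A : finType.

Definition tsum n (G : seq A -> R) : R := \sum_(x : n.-tuple A) G (tval x).

Lemma eq_tsum n G G' : (forall x, size x = n -> G x = G' x) -> tsum n G = tsum n G'.
Proof. by move=> h; apply: eq_bigr => x _; rewrite h // size_tuple. Qed.

Lemma tsum0 G : tsum 0 G = G [::].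
Proof.
rewrite /tsum (big_pred1 [tuple]) //= => x; rewrite /= tuple0.
by apply/esym/eqP.
Qed.

Lemma tsum_cons n G : tsum n.+1 G = \sum_(a : A) tsum n (fun x => G (a :: x)).
Proof.
rewrite /tsum pair_big /=.
rewrite (reindex (fun p : A * n.-tuple A => [tuple of p.1 :: p.2])) /=.
  by apply: eq_bigr.
exists (fun t : n.+1.-tuple A => (thead t, [tuple of behead t])).
  by case=> a x _ /=; rewrite theadE; congr (_, _); apply: val_inj.
by move=> t _; rewrite [RHS]tuple_eta.
Qed.

Lemma tsum_cat k m G : tsum (k + m) G = tsum k (fun h => tsum m (fun v => G (h ++ v))).
Proof.
elim: k G => [|k IH] G; first by rewrite add0n tsum0.
rewrite addSn tsum_cons tsum_cons; apply: eq_bigr => a _.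
by rewrite IH.
Qed.

Lemma tsum_split n (Q : pred (seq A)) (Q2 : seq A -> seq A -> bool) (F : seq A -> R)
 (D1 : forall h v, Q2 h v -> Q (h ++ v))
 (D2 : forall x, Q x -> exists2 k, (k <= size x)%N & Q2 (take k x) (drop k x))
 (D3 : forall h v h' v', Q2 h v -> Q2 h' v' -> h ++ v = h' ++ v' -> size h = size h') :
 tsum n (fun x => if Q x then F x else 0) =
 \sum_(k < n.+1) tsum k (fun h => tsum (n - k) (fun v => if Q2 h v then F (h ++ v) else 0)).
Proof.
transitivity (tsum n (fun x => \sum_(k < n.+1) if Q2 (take k x) (drop k x) then F x else 0)).
  apply: eq_tsum => x hx.
  case hQ: (Q x).
    have [k0 hk0 hq] := D2 _ hQ.
    have hk0' : (k0 < n.+1)%N by rewrite ltnS -hx.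
    rewrite (bigD1 (Ordinal hk0')) //= hq big1 ?addr0 //.
    move=> k /negbTE hne; case hq': (Q2 _ _) => //.
    have := D3 _ _ _ _ hq hq'; rewrite !cat_take_drop => /(_ erefl).
    rewrite !size_take_min => e.
    have hk : (k <= size x)%N by rewrite hx -ltnS.
    move: e; rewrite (minn_idPl hk0) (minn_idPl hk) => e.
    by move: hne; rewrite -val_eqE /= e eqxx.
  rewrite big1 // => k _; case hq': (Q2 _ _) => //.
  by move: (D1 _ _ hq'); rewrite cat_take_drop hQ.
rewrite {1}/tsum exchange_big /=; apply: eq_bigr => [[k hk]] _ /=.
have hk' : (k <= n)%N by rewrite -ltnS.
rewrite -/(tsum _ _).
transitivity (tsum (k + (n - k)) (fun x => if Q2 (take k x) (drop k x) then F x else 0)).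
  by rewrite (subnKC hk').
rewrite tsum_cat; apply: eq_tsum => h hh; apply: eq_tsum => v hv.
by rewrite -hh take_size_cat // drop_size_cat.
Qed.

End Sums.

Section Assembly.
Variable R : numFieldType.
Variable A : finType.
Variable p : A -> R.
Variable w : seq A.
Variable hw : (0 < size w)%N.
Local Notation l := (size w).
Local Notation P := (Pw p).
Local Notation fps := (fps2 R).
Local Notation tsum := (@tsum R A).

Lemma Pw_cat h v : P (h ++ v) = P h * P v.
Proof. by rewrite /Pw big_cat. Qed.

Lemma gfcE (L : pred (seq A)) n : gfc p L n = tsum n (fun x => if L x then P x else 0).
Proof. by rewrite /gfc big_mkcond. Qed.

Lemma tsumD n G1 G2 : tsum n (fun x => G1 x + G2 x) = tsum n G1 + tsum n G2.
Proof. by rewrite /tsum big_split. Qed.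

Lemma tsumN n G : tsum n (fun x => - G x) = - tsum n G.
Proof. by rewrite /tsum sumrN. Qed.

Lemma tsum_zero n : tsum n (fun _ => 0) = 0.
Proof. by rewrite /tsum big1. Qed.

Lemma tsum_mul k m G1 G2 :
  tsum k G1 * tsum m G2 = tsum k (fun h => tsum m (fun v => G1 h * G2 v)).
Proof.
rewrite /tsum mulr_suml; apply: eq_bigr => h _; rewrite mulr_sumr //.
Qed.

Lemma sum_pick (i c : nat) (X : nat -> R) :
  \sum_(j < i.+1) (if (nat_of_ord j == c)%N then X (nat_of_ord j) else 0) = if (c <= i)%N then X c else 0.
Proof.
case: leqP => h.
  have hc : (c < i.+1)%N by rewrite ltnS.
  rewrite (bigD1 (Ordinal hc)) //= eqxx big1 ?addr0 // => j /negbTE.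
  by rewrite -val_eqE /= => ->.
apply: big1 => j _; case: eqP => // e.
by move: (ltn_ord j); rewrite e ltnS leqNgt h.
Qed.

Lemma mulDl_pt (f g h : fps) i n :
  fps2_mul (fps2_add f g) h i n = fps2_mul f h i n + fps2_mul g h i n.
Proof.
rewrite /fps2_mul -big_split; apply: eq_bigr => j _.
rewrite -big_split; apply: eq_bigr => k _; by rewrite /fps2_add mulrDl.
Qed.

Lemma mulNl_pt (f h : fps) i n : fps2_mul (fps2_opp f) h i n = - fps2_mul f h i n.
Proof.
rewrite /fps2_mul -sumrN; apply: eq_bigr => j _.
rewrite -sumrN; apply: eq_bigr => k _; by rewrite /fps2_opp mulNr.
Qed.

Lemma mul1l_pt (h : fps) i n : fps2_mul (fps2_const 1) h i n = h i n.
Proof. by rewrite fps2_mulC fps2_mul1. Qed.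

Lemma mulu_pt (h : fps) i n : fps2_mul (fps2_u R) h i n = if i is i'.+1 then h i' n else 0.
Proof.
rewrite /fps2_mul.
transitivity (\sum_(j < i.+1) (if (nat_of_ord j == 1)%N then h (i - j)%N n else 0)).
  apply: eq_bigr => j _; rewrite big_ord_recl /= big1 ?addr0.
    by rewrite /fps2_u /= andbT subn0; case: eqP => _; rewrite ?mul1r ?mul0r.
  by move=> k _; rewrite /fps2_u /= andbF mul0r.
rewrite (sum_pick i 1 (fun j => h (i - j)%N n)); case: i => [|i] //=.
by rewrite subn1.
Qed.


Definition Mz : fps := fps2_z (gfc p (langM w)).
Definition Kz : fps := fps2_z (gfc p (langK w)).
Definition Dser : fps := fps2_add (fps2_add (fps2_const 1) (fps2_opp (fps2_mul (fps2_u R) Mz)))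
                             (fps2_mul (fps2_add (fps2_u R) (fps2_opp (fps2_const 1))) Kz).
Definition Eser : fps := fps2_add (fps2_const 1) (fps2_opp Dser).

Lemma Eser_expl i n :
  Eser i n = tsum n (fun m => if langM w m && (i == (l <= size m))%N then P m else 0).
Proof.
rewrite /Eser /fps2_add /fps2_opp /Dser /fps2_add /fps2_opp mulDl_pt mulNl_pt mul1l_pt !mulu_pt.
rewrite /Mz /Kz /fps2_z !gfcE.
set c := fps2_const 1 i n.
case: i c => [|[|i]] c /=.
- rewrite subr0 sub0r opprD opprK addrA subrr add0r.
  apply: eq_tsum => m _; rewrite langKE //.
  by rewrite eq_sym eqb0 -ltnNge.
- rewrite subr0 opprD opprB addrA [c + _]addrC subrK -tsumN -tsumD; apply: eq_tsum => m _.
  rewrite langKE // eq_sym eqb1.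
  by case: (langM w m); case: (ltnP (size m) l) => //=; rewrite ?subrr ?subr0.
- rewrite !subr0 addr0 subrr; apply/esym; rewrite /tsum big1 // => m _.
  by case: (langM w m); case: (l <= size m)%N.
Qed.

Lemma Eser0 i : Eser i 0 = 0.
Proof. by rewrite Eser_expl tsum0. Qed.


Definition Rz : fps := fps2_z (gfc p (langR w)).
Definition Uz : fps := fps2_z (gfc p (langU w)).
Definition Nz : fps := fps2_z (gfc p (langN w)).
Definition Hs : fps := fun i n => tsum n (fun x => if suffix w x && (cl w x == i) then P x else 0).

Lemma tsum_sum J n (G : 'I_J -> seq A -> R) :
  \sum_(j < J) tsum n (G j) = tsum n (fun x => \sum_(j < J) G j x).
Proof. by rewrite /tsum exchange_big. Qed.

Lemma pick_cond (i c b : nat) : ((c <= i) && (i - c == b))%N = (c + b == i)%N.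
Proof.
apply/idP/idP => [/andP [h1 /eqP <-]|/eqP <-]; first by rewrite subnKC.
by rewrite leq_addr addKn eqxx.
Qed.

Lemma Hs_fix : Hs = fps2_add (fps2_mul (fps2_u R) Rz) (fps2_mul Hs Eser).
Proof.
apply: functional_extensionality => i; apply: functional_extensionality => n.
rewrite /fps2_add mulu_pt.
transitivity (tsum n (fun x => if langR w x && (i == 1)%N then P x else 0) +
              tsum n (fun x => if QH w i x then P x else 0)).
  rewrite -tsumD; apply: eq_tsum => x _; rewrite /QH.
  case hR: (langR w x) => /=.
    rewrite (cl_R hw hR) eq_sym andbF addr0.
    by move: hR => /andP [-> _].
  by rewrite add0r.
congr (_ + _).
  case: i => [|[|i]] /=.
  - by rewrite /tsum big1 // => x _; rewrite andbF.
  - by rewrite /Rz /fps2_z /= gfcE; apply: eq_tsum => x _; rewrite andbT.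
  - by rewrite /tsum big1 // => x _; rewrite andbF.
rewrite /fps2_mul exchange_big /=.
rewrite (@tsum_split _ _ n (QH w i) (QH2 w i) P); last first.
- by move=> h v h' v'; apply: (H_D3 hw).
- by move=> x; apply: (H_D2 hw).
- by move=> h v; apply: (H_D1 hw).
apply: eq_bigr => k _.
under eq_bigr => j _ do rewrite /Hs Eser_expl tsum_mul.
rewrite [RHS]tsum_sum; apply: eq_tsum => h _.
rewrite [RHS]tsum_sum; apply: eq_tsum => m _.
rewrite Pw_cat; apply/esym.
transitivity (\sum_(j < i.+1) (if (nat_of_ord j == cl w h)%N then
   (if [&& suffix w h, langM w m & (i - nat_of_ord j == (l <= size m))%N] then P h * P m else 0)
   else 0)).
  apply: eq_bigr => j _; rewrite [(cl w h == _)%N]eq_sym.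
  case: (_ == _)%N; case: (suffix w h); case: (langM w m); case: (_ == _)%N => /=;
    by rewrite ?mulr0 ?mul0r.
rewrite (sum_pick i (cl w h) (fun j => if [&& suffix w h, langM w m & (i - j == (l <= size m))%N] then P h * P m else 0)).
rewrite /QH2 -pick_cond.
by case: (cl w h <= i)%N; case: (suffix w h); case: (langM w m).
Qed.


Lemma Gs_expl : fps2_mul Hs Uz = fun i n => tsum n (fun x => if QG w i x then P x else 0).
Proof.
apply: functional_extensionality => i; apply: functional_extensionality => n.
rewrite /fps2_mul exchange_big /=.
rewrite (@tsum_split _ _ n (QG w i) (QG2 w i) P); last first.
- by move=> h v h' v'; apply: (G_D3 hw).
- by move=> x; apply: (G_D2 hw).
- by move=> h v; apply: G_D1.
apply: eq_bigr => k _.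
transitivity (\sum_(j < i.+1) (if (nat_of_ord j == i)%N then Hs j k * gfc p (langU w) (n - k) else 0)).
  apply: eq_bigr => j _; rewrite /Uz /fps2_z subn_eq0.
  have hj : (j <= i)%N by rewrite -ltnS.
  case: (eqVneq (nat_of_ord j) i) => [->|ne]; first by rewrite leqnn.
  by rewrite (_ : (i <= j)%N = false) ?mulr0 //; apply/negbTE; rewrite -ltnNge ltn_neqAle ne hj.
rewrite (sum_pick i i (fun j => Hs j k * gfc p (langU w) (n - k))) leqnn.
rewrite /Hs gfcE tsum_mul; apply: eq_tsum => h _; apply: eq_tsum => v _.
rewrite Pw_cat /QG2.
by case: (suffix w h); case: (cl w h == i)%N; case: (langU w v); rewrite /= ?mulr0 ?mul0r.
Qed.

Lemma O_decomp : (fun i n => clump_prob p w n i) = fps2_add Nz (fps2_mul Hs Uz).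
Proof.
rewrite Gs_expl.
apply: functional_extensionality => i; apply: functional_extensionality => n.
rewrite /fps2_add /Nz /fps2_z.
transitivity (tsum n (fun x => if (cl w x == i)%N then P x else 0)).
  by rewrite /clump_prob big_mkcond; apply: eq_bigr => x _; rewrite nclumps_cl.
transitivity (tsum n (fun x => if langN w x && (i == 0)%N then P x else 0) +
              tsum n (fun x => if QG w i x then P x else 0)).
  rewrite -tsumD; apply: eq_tsum => x _; rewrite /QG /langN.
  case hI: (infix w x) => /=.
    by rewrite add0r.
  have : (cl w x == 0)%N by rewrite cl_eq0 // hI.
  by move/eqP => ->; rewrite eq_sym; case: (i == 0)%N; rewrite addr0.
congr (_ + _); case: (i == 0)%N; rewrite ?gfcE.
  by apply: eq_tsum => x _; rewrite andbT.
by rewrite /tsum big1 // => x _; rewrite andbF.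
Qed.

End Assembly.

Unset Implicit Arguments.

Theorem mainTheorem5 (R : realFieldType) (A : finType) (p : A -> R) (w : seq A)
  (hA : (1 < #|A|)%N) (hp : forall a, 0 < p a) (hsum : \sum_(a : A) p a = 1)
  (hw : (2 <= size w)%N) :
  let Nz := fps2_z (gfc p (langN w)) in
  let Rz := fps2_z (gfc p (langR w)) in
  let Uz := fps2_z (gfc p (langU w)) in
  let Mz := fps2_z (gfc p (langM w)) in
  let Kz := fps2_z (gfc p (langK w)) in
  let u := fps2_u R in
  let one := fps2_const 1 in
  (fun i n => clump_prob p w n i)
  = fps2_add Nz
      (fps2_mul (fps2_mul (fps2_mul u Rz) Uz)
         (fps2_inv (fps2_add (fps2_add one (fps2_opp (fps2_mul u Mz)))
                             (fps2_mul (fps2_add u (fps2_opp one)) Kz)))).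
Proof.
have hw1 : (0 < size w)%N by apply: ltnW.
move=> Nz0 Rz0 Uz0 Mz0 Kz0 u one.
rewrite (O_decomp (R:=R) p hw1).
congr fps2_add.
have hH := fix_sol (@Eser0 R A p w hw1) (@Hs_fix R A p w hw1).
rewrite hH.
change (fps2_inv _) with (Ssum (Eser p w)).
by rewrite -!fps2_mulA [fps2_mul (Ssum _) _]fps2_mulC.
Qed.
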